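(* For every $n$ with $2\le n\le\infty$, the single identity $xyx\approx yx^2$ is a finite identity basis for the stalactic monoid $\mathrm{stal}_n$ and for the taiga monoid $\mathrm{taig}_n$. Consequently, all stalactic and taiga monoids of rank at least $2$ (including rank $\infty$) are equationally equivalent, i.e. satisfy exactly the same identities.
   Context: Let $\mathcal{A}=\{1<2<3<\cdots\}$ and $\mathcal{A}_n=\{1<\cdots<n\}$; write $\mathcal{A}_\infty=\mathcal{A}$. A stalactic tableau is a finite array of symbols of $\mathcal{A}$ whose columns are top-aligned and in which two symbols lie in the same column iff they are equal. Inserting $a$ into a stalactic tableau $T$: if $a$ does not appear in $T$, add $a$ as a new column at the left end of the top row; otherwise append $a$ at the bottom of the column containing $a$. A binary search tree with multiplicities is a binary tree with pairwise distinct labels from $\mathcal{A}$ (each label greater than all labels in its left subtree and less than all labels in its right subtree) with a positive integer multiplicity attached to each node. Inserting $a$ into such a tree $T$: if $T$ is empty, create a node labelled $a$ with multiplicity $1$; otherwise, with root label $x$, recursively insert into the left subtree if $a<x$, into the right subtree if $a>x$, and increase the multiplicity of the root by $1$ if $a=x$. For a word $w=w_1\cdots w_k\in\mathcal{A}^*$, $\mathrm{P}_{\mathrm{stal}}(w)$ (resp. $\mathrm{P}_{\mathrm{taig}}(w)$) is obtained from the empty tableau (resp. empty tree) by inserting $w_k,w_{k-1},\dots,w_1$ in this order (reading $w$ right to left). The relation $u\equiv v \iff \mathrm{P}(u)=\mathrm{P}(v)$ is a congruence on $\mathcal{A}^*$; $\mathrm{stal}_n$ (resp. $\mathrm{taig}_n$)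 is the quotient monoid $\mathcal{A}_n^*/{\equiv}$ for the stalactic (resp. taiga) insertion, $2\le n\le\infty$. Identities: $\mathcal{X}$ is a countably infinite alphabet; an identity is $\mathbf{u}\approx\mathbf{v}$ with $\mathbf{u},\mathbf{v}\in\mathcal{X}^*$; a monoid $S$ satisfies it if $\varphi(\mathbf{u})=\varphi(\mathbf{v})$ for all maps $\varphi:\mathcal{X}\to S$ (extended to monoid homomorphisms). $\mathbf{u}\approx\mathbf{v}$ is derived from a set $\Sigma$ if there is a sequence $\mathbf{u}=\mathbf{u}_1,\dots,\mathbf{u}_n=\mathbf{v}$ with $\mathbf{u}_i=\mathbf{a}\varphi(\mathbf{p})\mathbf{b}$, $\mathbf{u}_{i+1}=\mathbf{a}\varphi(\mathbf{q})\mathbf{b}$ for some words $\mathbf{a},\mathbf{b}$, an endomorphism $\varphi$ of $\mathcal{X}^*$, and $\mathbf{p}\approx\mathbf{q}\in\Sigma$. A finite identity basis for $S$ is a finite set $\Sigma$ of identities satisfied by $S$ from which every identity satisfied by $S$ is derived. *)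

(* Defs.v *)
From mathcomp Require Import all_boot.
From Stdlib Require Import ClassicalEpsilon.
Set Implicit Arguments. Unset Strict Implicit. Unset Printing Implicit Defensive.

(* Letters of A are the positive naturals 1 < 2 < 3 < ...
   A rank is [Some k] for A_k = {1,...,k}, or [None] for A_infinity = A. *)
Definition rank := option nat.

Definition in_alph (n : rank) (a : nat) : bool :=
  (0 < a) && (if n is Some k then a <= k else true).

Definition rank_ge2 (n : rank) : Prop :=
  match n with Some k => 2 <= k | None => True end.

(* A stalactic tableau is the list of its columns from left to right; a
   column is recorded as (symbol, number of copies of that symbol). *)
Definition stal_tableau := seq (nat * nat).

Fixpoint bump_col (a : nat) (T : stal_tableau) : stal_tableau :=
  match T with
  | [::] => [::]
  | (b, k) :: T' => if b == a then (b, k.+1) :: T' else (b, k) :: bump_col a T'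
  end.

Definition stal_insert (a : nat) (T : stal_tableau) : stal_tableau :=
  if a \in map fst T then bump_col a T else (a, 1) :: T.

Definition P_stal (w : seq nat) : stal_tableau := foldr stal_insert [::] w.

(* Binary search trees with multiplicities: Node left label multiplicity right *)
Inductive bstm : Type :=
| Leaf : bstm
| Node : bstm -> nat -> nat -> bstm -> bstm.

Fixpoint taig_insert (a : nat) (T : bstm) : bstm :=
  match T with
  | Leaf => Node Leaf a 1 Leaf
  | Node l x m r =>
      if a < x then Node (taig_insert a l) x m r
      else if x < a then Node l x m (taig_insert a r)
      else Node l x m.+1 r
  end.

Definition P_taig (w : seq nat) : bstm := foldr taig_insert Leaf w.

Record monoid := Monoid { mcar : Type; mmul : mcar -> mcar -> mcar; mone : mcar }.

(* Variables X = nat (countably infinite); words over X are seq nat. *)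
Definition meval (M : monoid) (phi : nat -> mcar M) (w : seq nat) : mcar M :=
  foldr (fun x acc => mmul (phi x) acc) (mone M) w.

Definition satisfies (M : monoid) (u v : seq nat) : Prop :=
  forall phi : nat -> mcar M, meval phi u = meval phi v.

Definition subst (phi : nat -> seq nat) (w : seq nat) : seq nat :=
  flatten (map phi w).

Definition der_step (Sigma : seq (seq nat * seq nat)) (u v : seq nat) : Prop :=
  exists (a b p q : seq nat) (phi : nat -> seq nat),
    ((p, q) \in Sigma \/ (q, p) \in Sigma) /\
    u = a ++ subst phi p ++ b /\ v = a ++ subst phi q ++ b.

Inductive derivable (Sigma : seq (seq nat * seq nat)) : seq nat -> seq nat -> Prop :=
| der_refl u : derivable Sigma u u
| der_cons u v w : der_step Sigma u v -> derivable Sigma v w -> derivable Sigma u w.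

Definition identity_basis (M : monoid) (Sigma : seq (seq nat * seq nat)) : Prop :=
  (forall p q, (p, q) \in Sigma -> satisfies M p q) /\
  (forall u v, satisfies M u v -> derivable Sigma u v).

(* The classes of the congruence u == v <-> P u = P v on A_n^* are in
   bijection with the values P w, w in A_n^*; the product of two classes is
   the class of the concatenation of (chosen) representatives. *)
Definition qcar (K : Type) (P : seq nat -> K) (n : rank) : Type :=
  {T : K | exists w, all (in_alph n) w /\ P w = T}.

Definition qrep K (P : seq nat -> K) n (T : qcar P n) : seq nat :=
  proj1_sig (constructive_indefinite_description _ (proj2_sig T)).

Lemma qrep_spec K (P : seq nat -> K) n (T : qcar P n) :
  all (in_alph n) (qrep T) /\ P (qrep T) = proj1_sig T.
Proof. exact: (proj2_sig (constructive_indefinite_description _ (proj2_sig T))). Qed.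

Definition qmul K (P : seq nat -> K) n (T1 T2 : qcar P n) : qcar P n.
Proof.
refine (exist _ (P (qrep T1 ++ qrep T2)) _).
exists (qrep T1 ++ qrep T2); split=> //.
by rewrite all_cat (proj1 (qrep_spec T1)) (proj1 (qrep_spec T2)).
Defined.

Definition qone K (P : seq nat -> K) n : qcar P n :=
  exist _ (P [::]) (ex_intro _ [::] (conj erefl erefl)).

Definition quot_monoid K (P : seq nat -> K) (n : rank) : monoid :=
  @Monoid (qcar P n) (@qmul K P n) (@qone K P n).

Definition stal (n : rank) : monoid := quot_monoid P_stal n.
Definition taig (n : rank) : monoid := quot_monoid P_taig n.

(* The identity x y x = y x^2, with variables x = 0, y = 1. *)
Definition xyx_basis : seq (seq nat * seq nat) := [:: ([:: 0; 1; 0], [:: 1; 0; 0])].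

(* Main.v *)
Require Import Defs.
From mathcomp Require Import all_boot zify.
From Stdlib Require Import ProofIrrelevance.
Set Implicit Arguments. Unset Strict Implicit. Unset Printing Implicit Defensive.

Notation Sig := xyx_basis.


Lemma der_trans u v w : derivable Sig u v -> derivable Sig v w -> derivable Sig u w.
Proof. elim=> [//|u1 v1 w1 st _ IH] H; apply: der_cons st (IH H). Qed.

Lemma der_step_sym u v : der_step Sig u v -> der_step Sig v u.
Proof. case=> [a [b [p [q [phi [H [-> ->]]]]]]]. exists a, b, q, p, phi; split=>//; tauto. Qed.

Lemma der_sym u v : derivable Sig u v -> derivable Sig v u.
Proof.
elim=> [u0|u1 v1 w1 st _ IH]; first exact: der_refl.
apply: der_trans IH _. apply: der_cons (der_step_sym st) (der_refl _ _).
Qed.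

Lemma der_step_cat c u v : der_step Sig u v -> der_step Sig (c ++ u) (c ++ v).
Proof.
case=> [a [b [p [q [phi [H [-> ->]]]]]]].
exists (c ++ a), b, p, q, phi; split=> //; split; by rewrite catA.
Qed.

Lemma der_cat c u v : derivable Sig u v -> derivable Sig (c ++ u) (c ++ v).
Proof.
elim=> [u0|u1 v1 w1 st _ IH]; first exact: der_refl.
exact: der_cons (der_step_cat c st) IH.
Qed.

Fixpoint dup (a : nat) (s : seq nat) : seq nat :=
  match s with [::] => [::] | b :: s' => if b == a then a :: s else b :: dup a s' end.

Fixpoint nf (u : seq nat) : seq nat :=
  match u with [::] => [::] | a :: w => if a \in w then dup a (nf w) else a :: nf w end.

Lemma mem_dup a s (x : nat) : a \in s -> (x \in dup a s) = (x \in s).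
Proof.
elim: s => //= b s IH. case: eqP => [->|ba] H.
  by rewrite !in_cons orbA orbb.
have as' : a \in s by move: H; rewrite in_cons; case/orP => // /eqP ab; case: ba.
by rewrite !in_cons IH.
Qed.

Lemma mem_nf u (x : nat) : (x \in nf u) = (x \in u).
Proof.
elim: u x => //= a w IH x. case: ifP => aw.
  rewrite mem_dup; last by rewrite IH.
  rewrite IH in_cons. by case: eqP => // ->.
by rewrite !in_cons IH.
Qed.

Lemma dup_split a s : a \in s -> exists Y B, s = Y ++ a :: B /\ dup a s = Y ++ a :: a :: B.
Proof.
elim: s => //= b s IH. case: eqP => [->|ba] H.
  by exists [::], s.
have /IH [Y [B [-> ->]]] : a \in s.
  by move: H; rewrite in_cons; case/orP => // /eqP ab; case: ba.
by exists (b :: Y), B.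
Qed.

Lemma subst_cat psi u v : subst psi (u ++ v) = subst psi u ++ subst psi v.
Proof. by rewrite /subst map_cat flatten_cat. Qed.

Lemma subst3 phi i j k : subst phi [:: i; j; k] = phi i ++ phi j ++ phi k.
Proof. by rewrite /subst /= cats0. Qed.

Lemma step_dup a s : a \in s -> der_step Sig (a :: s) (dup a s).
Proof.
case/dup_split => Y [B [-> ->]].
exists [::], B, [:: 0; 1; 0], [:: 1; 0; 0], (fun i => if i == 0 then [:: a] else Y).
rewrite !subst3 /=; split; first by left; rewrite inE.
by rewrite -!catA.
Qed.

Lemma der_nf u : derivable Sig u (nf u).
Proof.
elim: u => [|a w IH] /=; first exact: der_refl.
have H1 : derivable Sig (a :: w) (a :: nf w) := der_cat [:: a] IH.
case: ifP => aw //.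
apply: der_trans H1 _. apply: der_cons (step_dup _) (der_refl _ _). by rewrite mem_nf.
Qed.

Lemma nf_der u v : nf u = nf v -> derivable Sig u v.
Proof. move=> E; apply: der_trans (der_nf u) _; rewrite E; exact: der_sym (der_nf v). Qed.
Lemma filter_dup (p : pred nat) a s :
  filter p (dup a s) = if p a then dup a (filter p s) else filter p s.
Proof.
elim: s => [|b s IH] /=; first by case: (p a).
case: eqP => [->|ba] /=.
  by case pa: (p a) => /=; rewrite ?pa ?eqxx.
have/negbTE bn : b != a by apply/eqP.
rewrite IH; case pa: (p a); case pb: (p b) => //=; by rewrite bn.
Qed.

Lemma nf_filter (p : pred nat) u : nf (filter p u) = filter p (nf u).
Proof.
elim: u => [|a w IH] //=. case pa: (p a) => /=.
  rewrite mem_filter pa /= IH. case: ifP => aw; by rewrite ?filter_dup /= pa.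
rewrite IH. case: ifP => _; by rewrite ?filter_dup /= pa.
Qed.

Lemma map_dup (f : nat -> nat) a s : injective f -> map f (dup a s) = dup (f a) (map f s).
Proof.
move=> fi; elim: s => [|b s IH] //=. rewrite inj_eq //. case: eqP => [->|_] //=. by rewrite IH.
Qed.

Lemma nf_map (f : nat -> nat) u : injective f -> nf (map f u) = map f (nf u).
Proof.
move=> fi; elim: u => [|a w IH] //=. rewrite mem_map // IH. case: ifP => _ //. by rewrite map_dup.
Qed.

Lemma filter2_eq (s t : seq nat) :
  (forall x y, filter (pred2 x y) s = filter (pred2 x y) t) -> s = t.
Proof.
elim: s t => [|a s IH] [|b t] H //.
- by have := H b b; rewrite /= eqxx.
- by have := H a a; rewrite /= eqxx.
have := H a b; rewrite /= !eqxx orbT /=; case=> ab _; subst b.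
f_equal; apply: IH => x y.
by have := H x y; rewrite /=; case: ifP => _ // [].
Qed.

Definition swap (i j k : nat) := if k == i then j else if k == j then i else k.

Lemma swapK i j : involutive (swap i j).
Proof.
move=> k; rewrite /swap.
case: (eqVneq k i) => [->|ki]; first by rewrite eqxx; case: (eqVneq j i) => [->|]; rewrite ?eqxx.
case: (eqVneq k j) => [->|kj]; first by rewrite eqxx.
by rewrite (negbTE ki) (negbTE kj).
Qed.

Definition fxy (x y : nat) : nat -> nat := fun z => swap 2 (swap 1 x y) (swap 1 x z).

Lemma fxy_inj x y : injective (fxy x y).
Proof. move=> a b /(can_inj (swapK _ _)) /(can_inj (swapK _ _)). done. Qed.

Definition in12 (c : nat) := (c == 1) || (c == 2).

Lemma fxy12 x y z : pred2 x y z -> in12 (fxy x y z).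
Proof.
rewrite /fxy /in12 /= => /orP[] /eqP ->.
  have -> : swap 1 x x = 1 by rewrite /swap; case: eqP => [->|]; rewrite ?eqxx.
  by rewrite /swap; case: (1 == swap 1 x y).
set g := swap 1 x y. have -> : swap 2 g g = 2 by rewrite /swap eqxx; case: eqP. by rewrite orbT.
Qed.




Section Moves.
Variables (K : Type) (ins : nat -> K -> K) (found : nat -> K -> bool) (e : K).
Hypothesis f1 : forall a b T, found b T -> found b (ins a T).
Hypothesis f2 : forall a T, found a (ins a T).
Hypothesis comm : forall a b T, found b T -> ins a (ins b T) = ins b (ins a T).

Lemma found_foldr Y b T : found b T -> found b (foldr ins T Y).
Proof. elim: Y => //= c Y IH H; apply: f1; exact: IH. Qed.

Lemma comm_foldr Y b T : found b T -> ins b (foldr ins T Y) = foldr ins (ins b T) Y.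
Proof.
elim: Y => //= c Y IH H. rewrite -IH //. symmetry; apply: comm. exact: found_foldr.
Qed.

Lemma found_all X T : all (found^~ (foldr ins T X)) X.
Proof.
elim: X => //= b X IH. rewrite f2 /=. apply/allP => c /(allP IH); exact: f1.
Qed.

Lemma swap_XY X Y T : all (found^~ T) X ->
  foldr ins (foldr ins T Y) X = foldr ins (foldr ins T X) Y.
Proof.
elim: X => //= b X IH /andP[Hb HX]. rewrite IH // comm_foldr //. exact: found_foldr.
Qed.

Lemma move_P A X Y B :
  foldr ins e (A ++ X ++ Y ++ X ++ B) = foldr ins e (A ++ Y ++ X ++ X ++ B).
Proof. rewrite !foldr_cat. congr (foldr ins _ A). apply: swap_XY. exact: found_all. Qed.

Lemma der_P u v : derivable Sig u v ->
  forall psi, foldr ins e (subst psi u) = foldr ins e (subst psi v).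
Proof.
elim=> [//|u1 v1 w1 st _ IH] psi; rewrite -IH.
case: st => [a [b [p [q [phi [Hpq [-> ->]]]]]]].
rewrite !subst_cat.
case: Hpq; rewrite inE => /eqP [-> ->]; rewrite !subst3 !subst_cat -!catA.
  exact: move_P.
by rewrite move_P.
Qed.
End Moves.

Section Quot.
Variables (K : Type) (P : seq nat -> K) (n : rank).
Hypothesis Pcat : forall w1 w2 w2', P w2 = P w2' -> P (w1 ++ w2) = P (w1 ++ w2').

Lemma qeq (x y : qcar P n) : proj1_sig x = proj1_sig y -> x = y.
Proof. case: x y => [x px] [y py] /= exy. subst y. by rewrite (proof_irrelevance _ px py). Qed.

Lemma meval_P (phi : nat -> qcar P n) w :
  proj1_sig (@meval (quot_monoid P n) phi w) = P (subst (fun x => qrep (phi x)) w).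
Proof.
elim: w => [|x w IH] //=.
rewrite (subst_cat _ [:: x] w) /subst /= cats0 -/(subst _ w).
apply: Pcat. rewrite -IH. exact: (proj2 (qrep_spec _)).
Qed.

Lemma sat_of u v : (forall psi, P (subst psi u) = P (subst psi v)) ->
  satisfies (quot_monoid P n) u v.
Proof. move=> H phi; apply: qeq; rewrite !meval_P; exact: H. Qed.

Lemma sat_to u v : satisfies (quot_monoid P n) u v -> forall phi : nat -> qcar P n,
  P (subst (fun x => qrep (phi x)) u) = P (subst (fun x => qrep (phi x)) v).
Proof. by move=> H phi; rewrite -!meval_P H. Qed.
End Quot.

Lemma Pstal_cons b w : P_stal (b :: w) = stal_insert b (P_stal w).
Proof. by []. Qed.

Lemma fst_bump a T : map fst (bump_col a T) = map fst T.
Proof. elim: T => //= [[b k] T IH] /=. case: eqP => //= _. by rewrite IH. Qed.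

Lemma stal_f1 a b T : b \in map fst T -> b \in map fst (stal_insert a T).
Proof.
rewrite /stal_insert; case: ifP => _; rewrite ?fst_bump // => H.
by rewrite /= in_cons H orbT.
Qed.

Lemma stal_f2 a T : a \in map fst (stal_insert a T).
Proof. rewrite /stal_insert; case: ifP => H; rewrite ?fst_bump //= in_cons eqxx //. Qed.

Lemma bump_comm a b T : bump_col a (bump_col b T) = bump_col b (bump_col a T).
Proof.
elim: T => //= [[c k] T IH].
case: (eqVneq c b) => [->|cb]; case: (eqVneq c a) => [ca|ca]; subst => /=;
  rewrite ?eqxx ?(negbTE cb) ?(negbTE ca) ?IH //.
all: case: (eqVneq b a) => [->|ba]; rewrite /= ?eqxx ?(negbTE ba) //.
Qed.

Lemma stal_comm a b T : b \in map fst T ->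
  stal_insert a (stal_insert b T) = stal_insert b (stal_insert a T).
Proof.
move=> H. rewrite /stal_insert H fst_bump. case: ifP => aT.
  by rewrite fst_bump H bump_comm.
rewrite /= in_cons H orbT /=. case: eqP => // ab. by rewrite ab H in aT.
Qed.

Lemma Pcat_stal w1 w2 w2' : P_stal w2 = P_stal w2' -> P_stal (w1 ++ w2) = P_stal (w1 ++ w2').
Proof. by rewrite /P_stal !foldr_cat => ->. Qed.

Fixpoint scount a (T : stal_tableau) : nat :=
  match T with [::] => 0 | (b, k) :: T' => (if b == a then k else 0) + scount a T' end.

Lemma scount_bump a b T : b \in map fst T -> scount a (bump_col b T) = scount a T + (b == a).
Proof.
elim: T => //= [[c k] T IH]; rewrite in_cons /=.
case: (eqVneq c b) => [->|cb] H /=; rewrite ?eqxx.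
  by case: (b == a); rewrite /= ?addn0 ?addSn ?addn1.
by rewrite IH ?addnA.
Qed.

Lemma scount_ins a b T : scount a (stal_insert b T) = scount a T + (b == a).
Proof.
rewrite /stal_insert; case: ifP => H; first exact: scount_bump.
by rewrite /= addnC.
Qed.

Lemma count_stal a w : count_mem a w = scount a (P_stal w).
Proof. elim: w => [|b w IH] //. rewrite Pstal_cons scount_ins -IH addnC /=. by []. Qed.

Lemma Pcount_stal w w' : P_stal w = P_stal w' -> forall a, count_mem a w = count_mem a w'.
Proof. by move=> E a; rewrite !count_stal E. Qed.

Fixpoint flat (T : stal_tableau) : seq nat :=
  match T with [::] => [::] | (b, k) :: T' => nseq k b ++ flat T' end.

Lemma fst_Pstal w (a : nat) : (a \in map fst (P_stal w)) = (a \in w).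
Proof.
elim: w a => [|b w IH] a //; rewrite Pstal_cons /stal_insert.
case: ifP => H; rewrite ?fst_bump /= ?in_cons IH ?in_cons //.
rewrite IH in H. by case: (eqVneq a b) => [->|].
Qed.

Lemma pos_bump a T : all (fun p => 0 < p.2) T -> all (fun p => 0 < p.2) (bump_col a T).
Proof. elim: T => //= [[c k] T IH] /= /andP[kp HT]. case: eqP => _ /=; by rewrite ?kp ?HT ?IH. Qed.

Lemma pos_Pstal w : all (fun p => 0 < p.2) (P_stal w).
Proof.
elim: w => [|b w IH] //; rewrite Pstal_cons /stal_insert.
case: ifP => _; [exact: pos_bump | by rewrite /= IH].
Qed.

Lemma dup_nseq a b k F : b != a -> dup a (nseq k b ++ F) = nseq k b ++ dup a F.
Proof. move=> /negbTE ba; elim: k => //= k ->. by rewrite ba. Qed.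

Lemma flat_bump a T : a \in map fst T -> all (fun p => 0 < p.2) T ->
  flat (bump_col a T) = dup a (flat T).
Proof.
elim: T => //= [[b k] T IH]; rewrite in_cons /= => H /andP[kp HT].
case: eqP => [->|ba] /=.
  by case: k kp => // k _ /=; rewrite eqxx.
rewrite dup_nseq; last by apply/eqP.
rewrite IH //. by move: H; case: eqP => // ab; case: ba.
Qed.

Lemma nf_stal w : nf w = flat (P_stal w).
Proof.
elim: w => [|b w IH] //; rewrite Pstal_cons /= /stal_insert fst_Pstal.
case: ifP => bw; last by rewrite /= IH.
by rewrite flat_bump ?fst_Pstal ?pos_Pstal // IH.
Qed.

Fixpoint tfound (b : nat) (T : bstm) : bool :=
  match T with
  | Leaf => false
  | Node l x _ r => if b < x then tfound b l else if x < b then tfound b r else true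
  end.

Lemma taig_f1 a b T : tfound b T -> tfound b (taig_insert a T).
Proof.
elim: T => //= l IHl x m r IHr.
case: (ltngtP a x) => _ /=; case: (ltngtP b x) => _ //; auto.
Qed.

Lemma taig_f2 a T : tfound a (taig_insert a T).
Proof.
elim: T => [|l IHl x m r IHr] /=; first by rewrite ltnn.
case: (ltngtP a x) => H /=.
- by rewrite H.
- by rewrite ltnNge (ltnW H) /= H.
- by subst; rewrite ltnn.
Qed.

Lemma insL a l x m r : a < x -> taig_insert a (Node l x m r) = Node (taig_insert a l) x m r.
Proof. by move=> /= ->. Qed.
Lemma insR a l x m r : x < a -> taig_insert a (Node l x m r) = Node l x m (taig_insert a r).
Proof. by move=> H /=; rewrite ltnNge (ltnW H) /= H. Qed.
Lemma insE l x m r : taig_insert x (Node l x m r) = Node l x m.+1 r.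
Proof. by rewrite /= ltnn. Qed.

Lemma taig_comm a b T : tfound b T ->
  taig_insert a (taig_insert b T) = taig_insert b (taig_insert a T).
Proof.
elim: T => //= l IHl x m r IHr.
case: (ltngtP b x) => Hb; case: (ltngtP a x) => Ha H; subst;
  rewrite ?(insL _ _ _ Ha) ?(insR _ _ _ Ha) ?(insL _ _ _ Hb) ?(insR _ _ _ Hb) ?insE
     ?(insL _ _ _ Ha) ?(insR _ _ _ Ha) ?(insL _ _ _ Hb) ?(insR _ _ _ Hb) ?insE //.
- by rewrite IHl.
- by rewrite IHr.
Qed.

Lemma Pcat_taig w1 w2 w2' : P_taig w2 = P_taig w2' -> P_taig (w1 ++ w2) = P_taig (w1 ++ w2').
Proof. by rewrite /P_taig !foldr_cat => ->. Qed.

Fixpoint tcount a (T : bstm) : nat :=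
  match T with Leaf => 0 | Node l x m r => tcount a l + (if x == a then m else 0) + tcount a r end.

Lemma tcount_ins a b T : tcount a (taig_insert b T) = tcount a T + (b == a).
Proof.
elim: T => [|l IHl x m r IHr] /=; first by case: (b == a).
case: (ltngtP b x) => H /=.
- rewrite IHl; lia.
- rewrite IHr; lia.
- subst; case: (x == a); lia.
Qed.

Lemma count_taig a w : count_mem a w = tcount a (P_taig w).
Proof. elim: w => [|b w IH] //. rewrite /P_taig /= tcount_ins -IH addnC. by []. Qed.

Lemma Pcount_taig w w' : P_taig w = P_taig w' -> forall a, count_mem a w = count_mem a w'.
Proof. by move=> E a; rewrite !count_taig E. Qed.


Fixpoint gT (T : bstm) : stal_tableau :=
  match T with Leaf => [::] | Node l x m r => gT l ++ gT r ++ [:: (x, m)] end.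

Definition good (T : bstm) : bool :=
  match T with
  | Leaf => true
  | Node Leaf x _ Leaf => in12 x
  | Node (Node Leaf y _ Leaf) x _ Leaf => (y == 1) && (x == 2)
  | Node Leaf x _ (Node Leaf y _ Leaf) => (x == 1) && (y == 2)
  | _ => false
  end.

Lemma good_step a T : in12 a -> good T ->
  good (taig_insert a T) && (gT (taig_insert a T) == stal_insert a (gT T)).
Proof.
move=> Ha; case: T => [|l x m r].
  by rewrite /= Ha /stal_insert /= eqxx.
case: l => [|[|? ? ? ?] y k [|? ? ? ?]]; case: r => [|[|? ? ? ?] z j [|? ? ? ?]] //=.
- move=> Hx; move: Ha Hx => /orP[]/eqP-> /orP[]/eqP-> //=; rewrite /stal_insert /= !eqxx //.
- move=> /andP[]/eqP-> /eqP->; move: Ha => /orP[]/eqP-> //=; rewrite /stal_insert /= !eqxx //.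
- move=> /andP[]/eqP-> /eqP->; move: Ha => /orP[]/eqP-> //=; rewrite /stal_insert /= !eqxx //.
Qed.

Lemma taig_stal2 w : all in12 w -> good (P_taig w) && (gT (P_taig w) == P_stal w).
Proof.
elim: w => [|b w IH] //= /andP[Hb Hw].
have /andP[H1 /eqP H2] := IH Hw.
have /andP[H3 /eqP H4] := good_step Hb H1.
change (good (taig_insert b (P_taig w)) && (gT (taig_insert b (P_taig w)) == stal_insert b (P_stal w))).
by rewrite H3 H4 H2 eqxx.
Qed.

Lemma taig_to_stal w w' : all in12 w -> all in12 w' -> P_taig w = P_taig w' -> P_stal w = P_stal w'.
Proof.
move=> /taig_stal2/andP[_ /eqP <-] /taig_stal2/andP[_ /eqP <-] ->. by [].
Qed.

Section Nec.
Variables (K : Type) (P : seq nat -> K) (n : rank).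
Hypothesis Pcat : forall w1 w2 w2', P w2 = P w2' -> P (w1 ++ w2) = P (w1 ++ w2').
Hypothesis Pcount : forall w w', P w = P w' -> forall a, count_mem a w = count_mem a w'.

Lemma small w s : size s <= 1 -> P w = P s -> w = s.
Proof.
move=> Hs E; apply: perm_small_eq => //.
rewrite /perm_eq; apply/allP => z _ /=; apply/eqP; exact: Pcount.
Qed.

Lemma nec (Hn : rank_ge2 n) u v : satisfies (quot_monoid P n) u v -> forall x y,
  P (map (fxy x y) (filter (pred2 x y) u)) = P (map (fxy x y) (filter (pred2 x y) v)).
Proof.
move=> H x y.
pose psi z := if pred2 x y z then [:: fxy x y z] else [::].
have Hw z : all (in_alph n) (psi z).
  rewrite /psi; case: ifP => // /fxy12; rewrite /in12 /= andbT.
  by case/orP => /eqP ->; rewrite /in_alph /=; case: n Hn => //= k Hk; exact: ltnW.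
pose phi z : qcar P n := exist _ (P (psi z)) (ex_intro _ (psi z) (conj (Hw z) erefl)).
have Hq z : qrep (phi z) = psi z.
  apply: small; first by rewrite /psi; case: ifP.
  by rewrite (proj2 (qrep_spec (phi z))).
have Hs w : subst (fun z => qrep (phi z)) w = map (fxy x y) (filter (pred2 x y) w).
  elim: w => //= z w IH. rewrite (subst_cat _ [:: z] w) IH /subst /= cats0 Hq /psi.
  by rewrite /=; case: ifP.
by have := sat_to Pcat H phi; rewrite !Hs.
Qed.
End Nec.

Lemma sound_stal n u v : derivable Sig u v -> satisfies (stal n) u v.
Proof.
move=> D; apply: sat_of; first exact: Pcat_stal.
move=> psi; rewrite /P_stal; exact: (der_P [::] stal_f1 stal_f2 stal_comm D psi).
Qed.

Lemma sound_taig n u v : derivable Sig u v -> satisfies (taig n) u v.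
Proof.
move=> D; apply: sat_of; first exact: Pcat_taig.
move=> psi; rewrite /P_taig; exact: (der_P Leaf taig_f1 taig_f2 taig_comm D psi).
Qed.

Lemma all12 x y u : all in12 (map (fxy x y) (filter (pred2 x y) u)).
Proof.
rewrite all_map; apply/allP => z; rewrite mem_filter => /andP[Hz _]; exact: fxy12.
Qed.

Lemma nec_stal n u v : rank_ge2 n -> satisfies (stal n) u v -> nf u = nf v.
Proof.
move=> Hn H. apply: filter2_eq => x y. rewrite -!nf_filter.
have E := nec Pcat_stal Pcount_stal Hn H x y.
have Hm : map (fxy x y) (nf (filter (pred2 x y) u)) = map (fxy x y) (nf (filter (pred2 x y) v)).
  by rewrite -!(nf_map _ (@fxy_inj x y)) !nf_stal E.
exact: (inj_map (@fxy_inj x y) Hm).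
Qed.

Lemma nec_taig n u v : rank_ge2 n -> satisfies (taig n) u v -> nf u = nf v.
Proof.
move=> Hn H. apply: filter2_eq => x y. rewrite -!nf_filter.
have E := nec Pcat_taig Pcount_taig Hn H x y.
have E' := taig_to_stal (all12 x y u) (all12 x y v) E.
have Hm : map (fxy x y) (nf (filter (pred2 x y) u)) = map (fxy x y) (nf (filter (pred2 x y) v)).
  by rewrite -!(nf_map _ (@fxy_inj x y)) !nf_stal E'.
exact: (inj_map (@fxy_inj x y) Hm).
Qed.

Lemma der_xyx : derivable Sig [:: 0; 1; 0] [:: 1; 0; 0].
Proof.
apply: der_cons (der_refl _ _).
exists [::], [::], [:: 0; 1; 0], [:: 1; 0; 0], (fun i => [:: i]).
by split; [left; rewrite inE | split].
Qed.

Theorem theorem4p2 :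
  (forall n : rank, rank_ge2 n ->
     identity_basis (stal n) xyx_basis /\ identity_basis (taig n) xyx_basis) /\
  (forall n m : rank, rank_ge2 n -> rank_ge2 m ->
     forall u v : seq nat,
       (satisfies (stal n) u v <-> satisfies (stal m) u v) /\
       (satisfies (stal n) u v <-> satisfies (taig m) u v)).
Proof.
split.
  move=> n Hn; split; split.
  - move=> p q; rewrite inE => /eqP [-> ->]; exact: sound_stal der_xyx.
  - move=> u v H; apply: nf_der; exact: nec_stal Hn H.
  - move=> p q; rewrite inE => /eqP [-> ->]; exact: sound_taig der_xyx.
  - move=> u v H; apply: nf_der; exact: nec_taig Hn H.
move=> n m Hn Hm u v; split; split => H.
- exact: sound_stal (nf_der (nec_stal Hn H)).
- exact: sound_stal (nf_der (nec_stal Hm H)).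
- exact: sound_taig (nf_der (nec_stal Hn H)).
- exact: sound_stal (nf_der (nec_taig Hm H)).
Qed.
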